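(* Let $(F,\Gamma)$ be a matched pair of finite groups with actions $\triangleleft:\Gamma\times F\to\Gamma$, $\triangleright:\Gamma\times F\to F$, and let $H=k^\Gamma\,{}^{\tau}\#_{\sigma}kF$ be a bicrossed product Hopf algebra fitting into the abelian exact sequence $k\to k^\Gamma\to H\to kF\to k$. Then this exact sequence induces by restriction an exact sequence of groups $1\to\widehat\Gamma\to G(H)\to F_0\to 1$, where $F_0=\{x\in F^\Gamma:\ [\tau_x]=1\}$ and $F^\Gamma\subseteq F$ is the subgroup of elements fixed by the action $\triangleright$.
   Context: $k$ is an algebraically closed field of characteristic zero. The bicrossed product is given by normalized compatible $2$-cocycles $\sigma:F\times F\to(k^\Gamma)^\times$, $\sigma(x,y)=\sum_s\sigma_s(x,y)e_s$, and $\tau:\Gamma\times\Gamma\to(k^F)^\times$, $\tau(s,t)=\sum_x\tau_x(s,t)e_x$ ($e_s,e_x$ the canonical idempotents), with multiplication $(e_s\#x)(e_t\#y)=\delta_{s\triangleleft x,t}\sigma_s(x,y)e_s\#xy$ and comultiplication $\Delta(e_s\#x)=\sum_{gh=s}\tau_x(g,h)\,e_g\#(h\triangleright x)\otimes e_h\#x$. For $x\in F^\Gamma$, $\tau_x:\Gamma\times\Gamma\to k^\times$ is a normalized $2$-cocycle and $[\tau_x]$ is its class in $H^2(\Gamma,k^\times)$. $G(H)$ is the group of group-likes of $H$ and $\widehat\Gamma=G(k^\Gamma)$ the group of characters of $\Gamma$. *)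

(* Defs.v *)
From HB Require Import structures.
From mathcomp Require Import all_boot all_order all_algebra all_fingroup.
Set Implicit Arguments. Unset Strict Implicit. Unset Printing Implicit Defensive.
Import GRing.Theory.
Local Open Scope ring_scope.

Section Bicrossed.
Variables (k : fieldType) (F Gm : finGroupType).
(* Gm plays the role of Gamma.
   ra s x = s <| x  (right action of F on Gamma),
   la s x = s |> x  (left action of Gamma on F). *)
Variables (ra : Gm -> F -> Gm) (la : Gm -> F -> F).
(* sig s x y = sigma_s(x,y) ; tau x s t = tau_x(s,t) *)
Variables (sig : Gm -> F -> F -> k) (tau : F -> Gm -> Gm -> k).

Definition matched_pair : Prop :=
  [/\ (forall s, ra s 1%g = s) /\ (forall s x y, ra s (x * y)%g = ra (ra s x) y),
      forall x, la 1%g x = x,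
      forall s t x, la (s * t)%g x = la s (la t x),
      forall s x y, la s (x * y)%g = (la s x * la (ra s x) y)%g
    & forall s t x, ra (s * t)%g x = (ra s (la t x) * ra t x)%g].

(* Normalized compatible 2-cocycles: exactly the conditions making the
   bicrossed product below a bialgebra (unital, associative, counital,
   coassociative, Delta and epsilon multiplicative). *)
Definition compatible_cocycles : Prop :=
  [/\ (forall s x y, sig s x y != 0) /\ (forall x s t, tau x s t != 0),
      (forall s x, sig s 1%g x = 1 /\ sig s x 1%g = 1) /\
      (forall x s, tau x 1%g s = 1 /\ tau x s 1%g = 1),
      (forall s x y z,
          sig (ra s x) y z * sig s x (y * z)%g = sig s x y * sig s (x * y)%g z),
      (forall x a b c,
          tau x (a * b)%g c * tau (la c x) a b = tau x a (b * c)%g * tau x b c)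
    & (forall g h x y,
          sig (g * h)%g x y * tau (x * y)%g g h =
          tau x g h * tau y (ra g (la h x)) (ra h x)
          * sig g (la h x) (la (ra h x) y) * sig h x y)].

(* Elements of H = k^Gamma ^tau#_sigma kF : a (s,x) is the coefficient of e_s # x. *)
Definition Hel := {ffun Gm * F -> k}.

(* (e_s#x)(e_t#y) = delta_{s<|x,t} sigma_s(x,y) e_s#xy *)
Definition bc_mul (a b : Hel) : Hel :=
  [ffun p => \sum_(x : F) a (p.1, x) * b (ra p.1 x, (x^-1 * p.2)%g)
                           * sig p.1 x (x^-1 * p.2)%g].

(* H (x) H identified with functions on (Gamma x F) x (Gamma x F). *)
Definition bc_comul (a : Hel) : {ffun (Gm * F) * (Gm * F) -> k} :=
  [ffun q => if q.1.2 == la q.2.1 q.2.2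
             then a ((q.1.1 * q.2.1)%g, q.2.2) * tau q.2.2 q.1.1 q.2.1
             else 0].

Definition bc_tensor (a b : Hel) : {ffun (Gm * F) * (Gm * F) -> k} :=
  [ffun q => a q.1 * b q.2].

(* epsilon(e_s#x) = delta_{s,1} *)
Definition bc_counit (a : Hel) : k := \sum_(x : F) a (1%g, x).

Definition grouplike (a : Hel) : Prop :=
  bc_comul a = bc_tensor a a /\ bc_counit a = 1.

Definition bc_iota (chi : {ffun Gm -> k}) : Hel :=
  [ffun p => if p.2 == 1%g then chi p.1 else 0].

(* H -> kF, e_s # x |-> delta_{s,1} x ; kF elements as coefficient functions *)
Definition bc_pi (a : Hel) : {ffun F -> k} := [ffun x => a (1%g, x)].

Definition delta_el (x : F) : {ffun F -> k} := [ffun y => (y == x)%:R].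

(* characters of Gamma = group-likes of k^Gamma *)
Definition character (chi : {ffun Gm -> k}) : Prop :=
  chi 1%g = 1 /\ forall s t, chi (s * t)%g = chi s * chi t.

Definition coh_trivial (f : Gm -> Gm -> k) : Prop :=
  exists mu : Gm -> k, (forall s, mu s != 0) /\
    forall s t, f s t = mu s * mu t / mu (s * t)%g.

Definition F0 (x : F) : Prop :=
  (forall s, la s x = x) /\ coh_trivial (tau x).

End Bicrossed.

Arguments bc_iota {k} F {Gm} chi.
Arguments delta_el {k F} x%_group_scope.

(* Main.v *)
Require Import Defs.
From HB Require Import structures.
From mathcomp Require Import all_boot all_order all_algebra all_fingroup.
Import GRing.Theory.
Local Open Scope ring_scope.

Theorem lemma2p2 (k : closedFieldType) (F Gm : finGroupType)
    (ra : Gm -> F -> Gm) (la : Gm -> F -> F)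
    (sig : Gm -> F -> F -> k) (tau : F -> Gm -> Gm -> k) :
  [pchar k] =i pred0 ->
  matched_pair ra la ->
  compatible_cocycles ra la sig tau ->
  [/\ (* iota restricts to a map hat(Gamma) -> G(H) ... *)
      (forall chi : {ffun Gm -> k}, character chi -> grouplike la tau (bc_iota F chi)) /\
      (* ... which is a group homomorphism ... *)
      (forall chi psi : {ffun Gm -> k}, character chi -> character psi ->
         bc_iota F [ffun s => chi s * psi s]
         = bc_mul ra sig (bc_iota F chi) (bc_iota F psi)),
      (* ... and injective *)
      (forall chi psi : {ffun Gm -> k}, character chi -> character psi ->
         bc_iota F chi = bc_iota F psi -> chi = psi),
      (* pi restricts to a map G(H) -> F_0 ... *)
      (forall g, grouplike la tau g -> exists2 x, F0 la tau x & bc_pi g = delta_el x) /\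
      (* ... which is a group homomorphism ... *)
      (forall g h x y, grouplike la tau g -> grouplike la tau h ->
         bc_pi g = delta_el x -> bc_pi h = delta_el y ->
         bc_pi (bc_mul ra sig g h) = delta_el (x * y)%g),
      (* ... and surjective onto F_0 ... *)
      (forall x, F0 la tau x -> exists2 g, grouplike la tau g & bc_pi g = delta_el x)
    & (* ... with kernel the image of hat(Gamma) *)
      (forall g, grouplike la tau g ->
         (bc_pi g = delta_el 1%g <-> exists2 chi : {ffun Gm -> k}, character chi & g = bc_iota F chi))].
Proof.
move=> _ [[ra1 raM] la1x laM laD raD] [[nzs nzt] [sn tn] sc tc cp].
have la_s1 s : la s 1%g = 1%g.
  have := laD s 1%g 1%g; rewrite mulg1 ra1 => H.
  by apply: (mulgI (la s 1%g)); rewrite mulg1; exact: esym H.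
have ra_1x x : ra 1%g x = 1%g.
  have := raD 1%g 1%g x; rewrite mulg1 la1x => H.
  by apply: (mulgI (ra 1%g x)); rewrite mulg1; exact: esym H.
have idem (a : k) : a != 0 -> a = a * a -> a = 1.
  by move=> nz H; apply: (mulfI nz); rewrite mulr1 -H.
have sn1 s x : sig s 1%g x = 1 by case: (sn s x).
have sn2 s x : sig s x 1%g = 1 by case: (sn s x).
have tn1 x s : tau x 1%g s = 1 by case: (tn x s).
have tn2 x s : tau x s 1%g = 1 by case: (tn x s).
have tau1 g h : tau 1%g g h = 1.
  have := cp g h 1%g 1%g; rewrite mulg1 !la_s1 !ra1 !sn1 !mulr1 mul1r.
  by move=> H; exact: idem (nzt _ _ _) H.
have sig1 x y : sig 1%g x y = 1.
  have := cp 1%g 1%g x y; rewrite mulg1 !la1x !ra_1x !tn1 !la1x mulr1 !mul1r.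
  by move=> H; exact: idem (nzs _ _ _) H.
have GL g : grouplike la tau g -> forall g1 x' h y,
    (if x' == la h y then g ((g1 * h)%g, y) * tau y g1 h else 0) = g (g1, x') * g (h, y).
  move=> [/ffunP E _] g1 x' h y; have := E ((g1, x'), (h, y)).
  by rewrite !ffunE.
have ST g x : grouplike la tau g -> g (1%g, x) = 1 ->
  [/\ forall s, la s x = x,
      forall s z, g (s, z) = if z == x then g (s, x) else 0,
      forall s t, g ((s * t)%g, x) * tau x s t = g (s, x) * g (t, x)
    & forall s, g (s, x) != 0].
  move=> Gg g1x.
  have col s z : g (s, z) = if z == x then g (s, x) else 0.
    have := GL g Gg s z 1%g x; rewrite la1x mulg1 tn2 mulr1 g1x mulr1.
    by move=> <-.
  have fx s : la s x = x.
    case: (eqVneq (la s x) x) => // ne; exfalso.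
    have := GL g Gg s^-1%g (la s x) s x.
    rewrite eqxx mulVg g1x mul1r (col _ (la s x)) (negPf ne) mul0r => H.
    by move: (nzt x s^-1%g s); rewrite H eqxx.
  have mu s t : g ((s * t)%g, x) * tau x s t = g (s, x) * g (t, x).
    by have := GL g Gg s x t x; rewrite fx eqxx.
  split => // s.
  have := mu s^-1%g s; rewrite mulVg g1x mul1r => H.
  apply/eqP => E; move: (nzt x s^-1%g s); by rewrite H E mulr0 eqxx.
have PI g : grouplike la tau g -> exists2 x, g (1%g, x) = 1 & bc_pi g = delta_el x.
  move=> Gg.
  have H1 y z : (if z == y then g (1%g, y) else 0) = g (1%g, z) * g (1%g, y).
    by have := GL g Gg 1%g z 1%g y; rewrite la1x mulg1 tn1 mulr1.
  have [x nx] : exists x, g (1%g, x) != 0.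
    case: (pickP (fun x => g (1%g, x) != 0)) => [x nx | none]; first by exists x.
    exfalso; case: Gg => _; rewrite /bc_counit big1 => [/eqP|y _].
      by rewrite eq_sym oner_eq0.
    by apply/eqP; move/negbFE: (none y).
  have g1x : g (1%g, x) = 1.
    by have := H1 x x; rewrite eqxx => H; exact: idem nx H.
  exists x => //; apply/ffunP => y; rewrite !ffunE.
  case: (eqVneq y x) => [->|ny]; first by rewrite g1x.
  have := H1 x y; rewrite (negPf ny) => /esym/eqP; rewrite mulf_eq0 (negPf nx) orbF.
  by move/eqP => ->.
split.
- split.
  + move=> chi [c1 cM]; split.
      apply/ffunP => [[[g1 x'] [h y]]]; rewrite !ffunE /=.
      case: (eqVneq y 1%g) => [->|ny]; last by rewrite !mul0r mulr0; case: ifP.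
      rewrite la_s1 tau1 mulr1 cM; by case: ifP; rewrite ?mul0r.
    rewrite /bc_counit (bigD1 1%g) //= ffunE /= eqxx c1 big1 ?addr0 // => z nz.
    by rewrite ffunE /= (negPf nz).
  + move=> chi psi _ _; apply/ffunP => [[s z]]; rewrite !ffunE /=.
    under eq_bigr => w _ do rewrite !ffunE /=.
    rewrite (bigD1 1%g) //= big1 ?addr0 => [|w nw]; last by rewrite (negPf nw) !mul0r.
    by rewrite eqxx invg1 mul1g ra1 sn1 mulr1; case: ifP; rewrite ?mul0r ?mulr0.
- move=> chi psi _ _ E; apply/ffunP => s.
  by move/ffunP: (E) => /(_ (s, 1%g)); rewrite !ffunE eqxx.
- split.
  + move=> g Gg; have [x g1x Ex] := PI g Gg; exists x => //.
    have [fx col mu nz] := ST g x Gg g1x.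
    split => //; exists (fun s => g (s, x)); split => // s t.
    by rewrite -mu [g ((s * t)%g, x) * _]mulrC mulfK.
  + move=> g h x y _ _ Eg Eh.
    have g1 w : g (1%g, w) = (w == x)%:R by move/ffunP: (Eg) => /(_ w); rewrite !ffunE.
    have h1 w : h (1%g, w) = (w == y)%:R by move/ffunP: (Eh) => /(_ w); rewrite !ffunE.
    apply/ffunP => z; rewrite !ffunE /=.
    under eq_bigr => w _ do rewrite ra_1x sig1 mulr1 g1 h1.
    rewrite (bigD1 x) //= big1 ?addr0 => [|w nw]; last by rewrite (negPf nw) mul0r.
    by rewrite eqxx mul1r -(inj_eq (mulgI x)) mulKVg.
- move=> x [fx [mu [nz tx]]].
  have mu1 : mu 1%g = 1.
    by have := tx 1%g 1%g; rewrite tn1 mulg1 mulfK // => /esym.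
  exists [ffun p => if p.2 == x then mu p.1 else 0].
    split.
      apply/ffunP => [[[g1 x'] [h y]]]; rewrite !ffunE /=.
      case: (eqVneq y x) => [->|ny]; last by rewrite mul0r mulr0; case: ifP.
      rewrite fx; case: ifP => _; rewrite ?mul0r ?mulr0 //.
      by rewrite tx mulrC divfK.
    rewrite /bc_counit (bigD1 x) //= ffunE /= eqxx mu1 big1 ?addr0 // => z nz'.
    by rewrite ffunE /= (negPf nz').
  apply/ffunP => z; rewrite !ffunE /=; case: (z == x); rewrite ?mu1 //.
- move=> g Gg; split.
  + move=> Eg.
    have g1 : g (1%g, 1%g) = 1 by move/ffunP: (Eg) => /(_ 1%g); rewrite !ffunE eqxx.
    have [fx col mu nz] := ST g 1%g Gg g1.
    exists [ffun s => g (s, 1%g)].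
      split => [|s t]; rewrite !ffunE //.
      by rewrite -mu tau1 mulr1.
    by apply/ffunP => [[s z]]; rewrite !ffunE /= col.
  + move=> [chi [c1 _] ->]; apply/ffunP => z; rewrite !ffunE /=.
    by case: (z == 1%g); rewrite ?c1.
Qed.
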